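(* Let $m\ge 1$ be an integer, $\Gamma_1,\Gamma_2$ co-prime integers with $1<\Gamma_1<\Gamma_2$, $m_1=m\Gamma_1$, $m_2=m\Gamma_2$, and $\sigma_1=|\Gamma_2|_{\Gamma_1}\ge 2$. Let $N$ be an integer with $0\le N< m_1\left(1+\lfloor m_2/m_1\rfloor\lfloor m_1/|m_2|_{m_1}\rfloor\right)$, write $N=n_im_i+r_i$ with $0\le r_i<m_i$ ($i=1,2$), and let $\tilde r_1,\tilde r_2$ be erroneous remainders with errors $\Delta r_i=\tilde r_i-r_i$ satisfying $-\sigma_1/2\le (\Delta r_1-\Delta r_2)/m<\sigma_1/2$. Let $\mathbf q_{21}=(\tilde r_1-\tilde r_2)/m$ and suppose $\mathbf q_{21}<-\sigma_1/2$. If $$\frac{\sigma_1}{2}\le \mathbf q_{21}-\left\lfloor\frac{\mathbf q_{21}}{\Gamma_1}\right\rfloor\Gamma_1<\left\lfloor\frac{\Gamma_1}{\sigma_1}\right\rfloor\sigma_1-\frac{\sigma_1}{2},$$ then $1\le n_2\le \lfloor\Gamma_1/\sigma_1\rfloor-1$; otherwise $n_2=0$.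
   Context: $|a|_b$ denotes the remainder of the integer $a$ modulo the positive integer $b$ (in $[0,b)$). Erroneous remainders are integers $\tilde r_i$ with $0\le \tilde r_i<m_i$. *)

(* Defs.v *)
From HB Require Import structures.
From mathcomp Require Import all_boot all_order all_algebra.
Set Implicit Arguments. Unset Strict Implicit. Unset Printing Implicit Defensive.

(* Main.v *)
Require Import Defs.
From HB Require Import structures.
From mathcomp Require Import all_boot all_order all_algebra.
From mathcomp Require Import ring lra zify.
Import Order.TTheory GRing.Theory Num.Theory.
Local Open Scope ring_scope.

Theorem lemma3 (m G1 G2 N rt1 rt2 : nat) :
  (1 <= m)%N -> (1 < G1)%N -> (G1 < G2)%N -> coprime G1 G2 ->
  (2 <= G2 %% G1)%N ->
  (N < (m * G1) * (1 + ((m * G2) %/ (m * G1)) * ((m * G1) %/ ((m * G2) %% (m * G1)))))%N ->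
  (rt1 < m * G1)%N -> (rt2 < m * G2)%N ->
  let m1 := (m * G1)%N in
  let m2 := (m * G2)%N in
  let sigma1 := (G2 %% G1)%N in
  let r1 := (N %% m1)%N in
  let r2 := (N %% m2)%N in
  let n2 := (N %/ m2)%N in
  let dr1 : rat := rt1%:R - r1%:R in
  let dr2 : rat := rt2%:R - r2%:R in
  let q21 : rat := (rt1%:R - rt2%:R) / m%:R in
  - (sigma1%:R / 2) <= (dr1 - dr2) / m%:R < sigma1%:R / 2 ->
  q21 < - (sigma1%:R / 2) ->
  let x : rat := q21 - (Num.floor (q21 / G1%:R))%:~R * G1%:R in
  ((sigma1%:R / 2 <= x < ((G1 %/ sigma1)%N)%:R * sigma1%:R - sigma1%:R / 2) ->
     (1 <= n2 <= (G1 %/ sigma1) - 1)%N) /\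
  (~ (sigma1%:R / 2 <= x < ((G1 %/ sigma1)%N)%:R * sigma1%:R - sigma1%:R / 2) ->
     n2 = 0%N).
Proof.
move=> hm hG1 hG12 hcop hs hN h1 h2 m1 m2 s r1 r2 n2 dr1 dr2 q21 /andP[he1 he2] hq x.
rewrite divnMl // -muln_modr divnMl // in hN.
have hG2 : G2 = (G2 %/ G1 * G1 + s)%N by rewrite /s -divn_eq.
have hLs : (G1 %/ s * s <= G1)%N by apply: leq_trunc_div.
have hN1 : N = (N %/ m1 * m1 + r1)%N by rewrite /r1 -divn_eq.
have hN2 : N = (n2 * m2 + r2)%N by rewrite /r2 /n2 -divn_eq.
set n1 := (N %/ m1)%N in hN1 *.
set e := (dr1 - dr2) / m%:R in he1 he2.
have hm0 : m%:R != 0 :> rat by rewrite pnatr_eq0 -lt0n.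
have hqe : q21 = n2%:R * G2%:R - n1%:R * G1%:R + e.
  have hr1 : r1%:R = N%:R - n1%:R * (m%:R * G1%:R) :> rat.
    rewrite {1}hN1 /m1 natrD !natrM; ring.
  have hr2 : r2%:R = N%:R - n2%:R * (m%:R * G2%:R) :> rat.
    rewrite {1}hN2 /m2 natrD !natrM; ring.
  by rewrite /q21 /e /dr1 /dr2 hr1 hr2; field.
set k := (G2 %/ G1)%N in hN hG2.
set L := (G1 %/ s)%N in hN hLs *.
have hs2 : (1 < s)%N by [].
clearbody e q21 k L n1 r1 r2 n2 s.
have qneg : (n2 * G2 < n1 * G1)%N.
  rewrite -(ltr_nat rat) !natrM. move: hqe hq he1; generalize (n2%:R * G2%:R : rat) (n1%:R * G1%:R : rat) => a b; lra.
have hn2L : (n2 < L)%N.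
  rewrite ltnNge; apply/negP => hLn.
  have h3 : (L*k*G1 < n1*G1)%N.
    apply: leq_ltn_trans qneg. rewrite -mulnA. apply: leq_mul hLn _.
    by rewrite hG2 leq_addr.
  rewrite ltn_pmul2r in h3; last lia.
  have h4 : ((1 + k*L) * m1 <= n1 * m1)%N by apply: leq_mul => //; lia.
  rewrite /m1 in hN1 h4. lia.
have hG1r : (0 : rat) < G1%:R by rewrite ltr0n; lia.
have hsr : (2 : rat) <= s%:R by rewrite ler_nat.
have hLsr : L%:R * s%:R <= G1%:R :> rat by rewrite -natrM ler_nat.
have hA : (n2%:R + 1) * s%:R <= L%:R * s%:R :> rat.
  by rewrite -natrM natr1 -natrM ler_nat leq_mul.
have hsG : n2%:R * s%:R + s%:R <= G1%:R :> rat by lra.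
have hns : 0 <= n2%:R * s%:R :> rat by rewrite -natrM ler0n.
have hqe' : q21 = n2%:R * s%:R + e + (n2%:R * k%:R - n1%:R) * G1%:R.
  by rewrite hqe hG2 natrD !natrM; ring.
pose c : int := (n2 * k)%:Z - n1%:Z.
have hc : c%:~R = n2%:R * k%:R - n1%:R :> rat.
  by rewrite /c intrB -!pmulrn natrM.
have hfl : 0 <= n2%:R * s%:R + e -> x = n2%:R * s%:R + e.
  move=> hy; rewrite /x; have -> : Num.floor (q21 / G1%:R) = c.
    apply: floor_def; rewrite intrD hc ler_pdivlMr // ltr_pdivrMr // hqe'.
    apply/andP; split; lra.
  rewrite hc hqe'; lra.
have hx : (n2 = 0%N /\ e < 0 /\ x = e + G1%:R) \/ (x = n2%:R * s%:R + e).
  have [hn0|hn0] := eqVneq n2 0%N.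
    have hsG1 : s%:R <= G1%:R :> rat by move: hsG; rewrite hn0 mul0r add0r.
    have [he0|he0] := ltrP e 0.
      left; split => //; split => //.
      rewrite /x; have -> : Num.floor (q21 / G1%:R) = c - 1.
        apply: floor_def; rewrite subrK intrB hc ler_pdivlMr // ltr_pdivrMr //.
        rewrite hqe' hn0 /=; apply/andP; split.
          lra. lra.
      rewrite intrB hc hqe' hn0 /=; lra.
    by right; apply: hfl; rewrite hn0 mul0r add0r.
  right; apply: hfl.
  have : (1 : rat) <= n2%:R by rewrite ler1n lt0n.
  move=> h1n; have : s%:R <= n2%:R * s%:R :> rat by rewrite ler_peMl // ?ler0n.
  lra.
have [hn0|hn0] := eqVneq n2 0%N.
  split => [hcd|_//]; exfalso; move/andP: hcd => [ha hb].
  case: hx => [[_ [he0 hxe]]|hxe]; rewrite hxe in ha hb; first lra.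
  by move: ha; rewrite hn0 mul0r add0r; lra.
have hxe : x = n2%:R * s%:R + e by case: hx => [[hh _]|//]; rewrite hh in hn0.
have h1n : (1 : rat) <= n2%:R by rewrite ler1n lt0n.
have : s%:R <= n2%:R * s%:R :> rat by rewrite ler_peMl // ?ler0n.
move=> hsn.
split => [_|hnc].
  by rewrite lt0n hn0 /=; clear -hn2L; lia.
by exfalso; apply: hnc; rewrite hxe; apply/andP; split; lra.
Qed.
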